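(* Fix $I_{12},I_{23},I_{31}\in[0,\infty)$. For $(u_1,u_2,u_3)\in\mathcal{U}_H^{123}$, let $\alpha_1,\alpha_2,\alpha_3$ be the inner angles, opposite to sides $l_1,l_2,l_3$ respectively, of the hyperbolic triangle with side lengths $l_1,l_2,l_3$. Then the Jacobian matrix $\left(\partial\alpha_i/\partial u_j\right)_{i,j=1}^3$ is negative definite at every point of $\mathcal{U}_H^{123}$.
   Context: Put $u_i=\ln\tanh(r_i/2)$ with $r_i>0$ for $i=1,2,3$. Let $l_1,l_2,l_3>0$ be given by $$\cosh l_1=\cosh r_2\cosh r_3+I_{23}\sinh r_2\sinh r_3,$$ $$\cosh l_2=\cosh r_3\cosh r_1+I_{31}\sinh r_3\sinh r_1,$$ $$\cosh l_3=\cosh r_1\cosh r_2+I_{12}\sinh r_1\sinh r_2.$$ The set $\mathcal{U}_H^{123}\subset(-\infty,0)^3$ is the set of $(u_1,u_2,u_3)$ for which $l_1,l_2,l_3$ satisfy the strict triangle inequalities. The Jacobian matrix $\left(\partial\alpha_i/\partial u_j\right)$ is symmetric. *)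

(* Defs.v *)
From Stdlib Require Import Reals Lra.
Open Scope R_scope.

Definition arcosh (x : R) : R := ln (x + sqrt (x * x - 1)).

(* r as a function of u, inverting u = ln (tanh (r/2)) for u < 0, r > 0:
   tanh (r/2) = exp u  <->  r = ln ((1 + exp u) / (1 - exp u)). *)
Definition r_of_u (u : R) : R := ln ((1 + exp u) / (1 - exp u)).

Definition len (I r r' : R) : R :=
  arcosh (cosh r * cosh r' + I * sinh r * sinh r').

Definition l1 (I12 I23 I31 u1 u2 u3 : R) : R := len I23 (r_of_u u2) (r_of_u u3).
Definition l2 (I12 I23 I31 u1 u2 u3 : R) : R := len I31 (r_of_u u3) (r_of_u u1).
Definition l3 (I12 I23 I31 u1 u2 u3 : R) : R := len I12 (r_of_u u1) (r_of_u u2).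

(* inner angle opposite to side a in the hyperbolic triangle with sides a b c
   (hyperbolic law of cosines) *)
Definition hangle (a b c : R) : R :=
  acos ((cosh b * cosh c - cosh a) / (sinh b * sinh c)).

(* alpha_i, i = 0,1,2 standing for 1,2,3 *)
Definition alpha (I12 I23 I31 : R) (i : nat) (u1 u2 u3 : R) : R :=
  let a := l1 I12 I23 I31 u1 u2 u3 in
  let b := l2 I12 I23 I31 u1 u2 u3 in
  let c := l3 I12 I23 I31 u1 u2 u3 in
  match i with
  | 0%nat => hangle a b c
  | 1%nat => hangle b c a
  | _ => hangle c a b
  end.

Definition U_H123 (I12 I23 I31 u1 u2 u3 : R) : Prop :=
  u1 < 0 /\ u2 < 0 /\ u3 < 0 /\
  let a := l1 I12 I23 I31 u1 u2 u3 in
  let b := l2 I12 I23 I31 u1 u2 u3 in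
  let c := l3 I12 I23 I31 u1 u2 u3 in
  a < b + c /\ b < c + a /\ c < a + b.

Definition section (f : R -> R -> R -> R) (j : nat) (u1 u2 u3 : R) : R -> R :=
  fun t => match j with
           | 0%nat => f t u2 u3
           | 1%nat => f u1 t u3
           | _ => f u1 u2 t
           end.

Definition neg_def3 (M : nat -> nat -> R) : Prop :=
  forall x : nat -> R, (x 0%nat <> 0 \/ x 1%nat <> 0 \/ x 2%nat <> 0) ->
    sum_f_R0 (fun i => sum_f_R0 (fun j => x i * M i j * x j) 2) 2 < 0.

(* Main.v *)
Require Import Defs.
From Stdlib Require Import Reals Lra Nsatz Lia.
Open Scope R_scope.

Lemma dl_ext (f g : R -> R) x l l' : (forall v, f v = g v) -> l = l' ->
  derivable_pt_lim f x l -> derivable_pt_lim g x l'.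
Proof.
  intros H <- Hf eps He. destruct (Hf eps He) as [d Hd]. exists d. intros h h0 hd.
  rewrite <- !H. apply Hd; auto.
Qed.
Lemma dl_eq (f : R -> R) x l l' : l = l' -> derivable_pt_lim f x l -> derivable_pt_lim f x l'.
Proof. intros <-; auto. Qed.
Lemma dl_mul f g x a b : derivable_pt_lim f x a -> derivable_pt_lim g x b ->
  derivable_pt_lim (fun v => f v * g v) x (a * g x + f x * b).
Proof. intros. apply (derivable_pt_lim_mult f g); auto. Qed.
Lemma dl_add f g x a b : derivable_pt_lim f x a -> derivable_pt_lim g x b ->
  derivable_pt_lim (fun v => f v + g v) x (a + b).
Proof. intros. apply (derivable_pt_lim_plus f g); auto. Qed.
Lemma dl_sub f g x a b : derivable_pt_lim f x a -> derivable_pt_lim g x b ->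
  derivable_pt_lim (fun v => f v - g v) x (a - b).
Proof. intros. apply (derivable_pt_lim_minus f g); auto. Qed.
Lemma dl_div f g x a b : derivable_pt_lim f x a -> derivable_pt_lim g x b -> g x <> 0 ->
  derivable_pt_lim (fun v => f v / g v) x ((a * g x - b * f x) / (g x * g x)).
Proof. intros. eapply dl_eq; [|apply (derivable_pt_lim_div f g)]. all: unfold Rsqr; auto. Qed.
Lemma dl_comp (h f : R -> R) x a c : derivable_pt_lim f x a -> derivable_pt_lim h (f x) c ->
  derivable_pt_lim (fun v => h (f v)) x (c * a).
Proof. intros. apply (derivable_pt_lim_comp f h); auto. Qed.
Lemma dl_const (k x : R) : derivable_pt_lim (fun _ => k) x 0.
Proof. apply (derivable_pt_lim_const k). Qed.
Lemma dl_id (x : R) : derivable_pt_lim (fun v => v) x 1.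
Proof. apply derivable_pt_lim_id. Qed.
Lemma dl_cmul (k : R) f x a : derivable_pt_lim f x a -> derivable_pt_lim (fun v => k * f v) x (k * a).
Proof. intros. eapply dl_eq; [|apply dl_mul; [apply dl_const|eauto]]. simpl; ring. Qed.
Lemma dl_acos x : -1 < x < 1 -> derivable_pt_lim acos x (-1 / sqrt (1 - x * x)).
Proof. intros H. pose proof (derive_pt_acos x H). unfold Rsqr in H0. rewrite <- H0.
  destruct (derivable_pt_acos x H) as [l Hl] eqn:E. simpl. exact Hl. Qed.

Lemma cosh_sinh_sq x : cosh x * cosh x - sinh x * sinh x = 1.
Proof. unfold cosh, sinh. rewrite exp_Ropp. pose proof (exp_pos x). field. lra. Qed.

Lemma expu_lt1 u : u < 0 -> exp u < 1.
Proof. intros. rewrite <- exp_0. apply exp_increasing; auto. Qed.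

Lemma r_cosh u : u < 0 -> cosh (r_of_u u) =
  ((1 + exp u)/(1 - exp u) + /((1 + exp u)/(1 - exp u)))/2.
Proof. intros Hu. pose proof (expu_lt1 u Hu). pose proof (exp_pos u).
  unfold cosh, r_of_u. rewrite exp_Ropp, exp_ln. reflexivity.
  apply Rdiv_lt_0_compat; lra. Qed.
Lemma r_sinh u : u < 0 -> sinh (r_of_u u) =
  ((1 + exp u)/(1 - exp u) - /((1 + exp u)/(1 - exp u)))/2.
Proof. intros Hu. pose proof (expu_lt1 u Hu). pose proof (exp_pos u).
  unfold sinh, r_of_u. rewrite exp_Ropp, exp_ln. reflexivity.
  apply Rdiv_lt_0_compat; lra. Qed.
Lemma r_B_pos u : u < 0 -> 0 < sinh (r_of_u u).
Proof. intros Hu. rewrite r_sinh; auto. pose proof (expu_lt1 u Hu). pose proof (exp_pos u).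
  set (E := exp u) in *.
  replace (((1 + E) / (1 - E) - / ((1 + E) / (1 - E))) / 2) with (2*E/((1-E)*(1+E))) by (field; lra).
  apply Rdiv_lt_0_compat; nra. Qed.
Lemma r_A_gt1 u : u < 0 -> 1 < cosh (r_of_u u).
Proof. intros Hu. rewrite r_cosh; auto. pose proof (expu_lt1 u Hu). pose proof (exp_pos u).
  set (E := exp u) in *.
  replace (((1 + E) / (1 - E) + / ((1 + E) / (1 - E))) / 2) with (1 + 2*E*E/((1-E)*(1+E))) by (field; lra).
  assert (0 < 2*E*E/((1-E)*(1+E))) by (apply Rdiv_lt_0_compat; nra). lra. Qed.

Lemma d_r u : u < 0 -> derivable_pt_lim r_of_u u (sinh (r_of_u u)).
Proof. intros Hu. pose proof (expu_lt1 u Hu). pose proof (exp_pos u).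
  unfold r_of_u at 1.
  eapply dl_eq; [| apply (dl_comp ln (fun v => (1 + exp v)/(1 - exp v)))].
  3: apply derivable_pt_lim_ln; apply Rdiv_lt_0_compat; lra.
  2: apply dl_div; [apply dl_add; [apply dl_const|apply derivable_pt_lim_exp]
                   |apply dl_sub; [apply dl_const|apply derivable_pt_lim_exp]|lra].
  rewrite r_sinh; auto. field. lra.
Qed.

Lemma d_A (f : R -> R) x df : derivable_pt_lim f x df -> f x < 0 ->
  derivable_pt_lim (fun v => cosh (r_of_u (f v))) x
    (sinh (r_of_u (f x)) * sinh (r_of_u (f x)) * df).
Proof. intros Hf Hx. eapply dl_eq; [|apply (dl_comp cosh (fun v => r_of_u (f v)))].
  3: apply derivable_pt_lim_cosh. 2: apply dl_comp; [exact Hf| apply d_r; auto]. ring. Qed.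
Lemma d_B (f : R -> R) x df : derivable_pt_lim f x df -> f x < 0 ->
  derivable_pt_lim (fun v => sinh (r_of_u (f v))) x
    (cosh (r_of_u (f x)) * sinh (r_of_u (f x)) * df).
Proof. intros Hf Hx. eapply dl_eq; [|apply (dl_comp sinh (fun v => r_of_u (f v)))].
  3: apply derivable_pt_lim_sinh. 2: apply dl_comp; [exact Hf| apply d_r; auto]. ring. Qed.

Lemma d_X (I : R) (f g : R -> R) x df dg : derivable_pt_lim f x df -> derivable_pt_lim g x dg ->
  f x < 0 -> g x < 0 ->
  derivable_pt_lim (fun v => cosh (r_of_u (f v)) * cosh (r_of_u (g v)) + I * sinh (r_of_u (f v)) * sinh (r_of_u (g v))) x
   (df * (sinh (r_of_u (f x)) * (sinh (r_of_u (f x)) * cosh (r_of_u (g x)) + I * cosh (r_of_u (f x)) * sinh (r_of_u (g x))))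
  + dg * (sinh (r_of_u (g x)) * (sinh (r_of_u (g x)) * cosh (r_of_u (f x)) + I * cosh (r_of_u (g x)) * sinh (r_of_u (f x))))).
Proof. intros Hf Hg Hfx Hgx.
  eapply dl_eq; [|apply dl_add; [apply dl_mul; [apply d_A; eauto| apply d_A; eauto]
     | apply dl_mul; [apply dl_cmul; apply d_B; eauto | apply d_B; eauto]]].
  cbv beta; ring. Qed.

Lemma arcosh_vals X : 1 <= X ->
  cosh (arcosh X) = X /\ sinh (arcosh X) = sqrt (X*X - 1).
Proof. intros HX. assert (H0 : 0 <= X*X-1) by nra.
  pose proof (sqrt_pos (X*X-1)). pose proof (sqrt_sqrt _ H0).
  set (s := sqrt (X*X-1)) in *.
  unfold cosh, sinh, arcosh. fold s. rewrite exp_Ropp, exp_ln by lra.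
  assert (Hi : / (X + s) = X - s).
  { assert (X + s <> 0) by nra. field_simplify_eq; auto. nra. }
  rewrite Hi. split; field.
Qed.
Lemma arcosh_nonneg X : 1 <= X -> 0 <= arcosh X.
Proof. intros HX. pose proof (sqrt_pos (X*X-1)). unfold arcosh.
  destruct (Req_dec (X + sqrt (X*X-1)) 1) as [E|E].
  - rewrite E, ln_1; lra.
  - left. rewrite <- ln_1. apply ln_increasing; lra. Qed.

Lemma d_arcosh (x : R -> R) v d : derivable_pt_lim x v d -> 1 < x v ->
  derivable_pt_lim (fun w => arcosh (x w)) v (d / sqrt (x v * x v - 1)).
Proof. intros Hx H1. assert (H0 : 0 < x v * x v - 1) by nra.
  pose proof (sqrt_lt_R0 _ H0). pose proof (sqrt_sqrt _ (Rlt_le _ _ H0)).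
  unfold arcosh.
  eapply dl_eq; [|apply (dl_comp ln (fun w => x w + sqrt (x w * x w - 1)))].
  3: apply derivable_pt_lim_ln; lra.
  2: apply dl_add; [exact Hx| apply (dl_comp sqrt (fun w => x w * x w - 1))];
     [apply dl_sub; [apply dl_mul; exact Hx| apply dl_const] | apply derivable_pt_lim_sqrt; auto].
  set (s := sqrt (x v * x v - 1)) in *. field. split; lra.
Qed.

Lemma d_ch (x : R -> R) v d : derivable_pt_lim x v d -> 1 < x v ->
  derivable_pt_lim (fun w => cosh (arcosh (x w))) v d.
Proof. intros Hx H1. eapply dl_eq; [|apply (dl_comp cosh (fun w => arcosh (x w)))].
  3: apply derivable_pt_lim_cosh. 2: apply (d_arcosh x v d); auto.
  cbv beta. rewrite (proj2 (arcosh_vals (x v) ltac:(lra))).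
  assert (H0 : 0 < x v * x v - 1) by nra. pose proof (sqrt_lt_R0 _ H0). field. lra. Qed.
Lemma d_sh (x : R -> R) v d : derivable_pt_lim x v d -> 1 < x v ->
  derivable_pt_lim (fun w => sinh (arcosh (x w))) v (x v * d / sqrt (x v * x v - 1)).
Proof. intros Hx H1. eapply dl_eq; [|apply (dl_comp sinh (fun w => arcosh (x w)))].
  3: apply derivable_pt_lim_sinh. 2: apply (d_arcosh x v d); auto.
  cbv beta. rewrite (proj1 (arcosh_vals (x v) ltac:(lra))).
  assert (H0 : 0 < x v * x v - 1) by nra. pose proof (sqrt_lt_R0 _ H0). field. lra. Qed.

Lemma alg_HG (c1 c2 c3 s2 s3 q : R) : s2*s2 = c2*c2-1 -> s3*s3 = c3*c3-1 ->
  q * q = 1 + 2 * c1 * c2 * c3 - c1 * c1 - c2 * c2 - c3 * c3 -> 0 < s2 -> 0 < s3 ->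
  1 - ((c2 * c3 - c1) / (s2 * s3)) * ((c2 * c3 - c1) / (s2 * s3)) = (q/(s2*s3))*(q/(s2*s3)).
Proof. intros. field_simplify_eq; [|split; lra]. replace (s2^2) with (c2*c2-1) by (rewrite <- H; ring). replace (s3^2) with (c3*c3-1) by (rewrite <- H0; ring). replace (q^2) with (q*q) by ring. rewrite H1. ring. Qed.

Definition Dl (c1 c2 c3 : R) := 1 + 2*c1*c2*c3 - c1*c1 - c2*c2 - c3*c3.
Definition gJ (c1 c2 c3 d1 d2 d3 : R) :=
  (d1 - (c1*c2-c3)/(c2*c2-1)*d2 - (c1*c3-c2)/(c3*c3-1)*d3) / sqrt (Dl c1 c2 c3).

Lemma d_angle (x1 x2 x3 : R -> R) v d1 d2 d3 :
  derivable_pt_lim x1 v d1 -> derivable_pt_lim x2 v d2 -> derivable_pt_lim x3 v d3 ->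
  1 < x1 v -> 1 < x2 v -> 1 < x3 v -> 0 < Dl (x1 v) (x2 v) (x3 v) ->
  derivable_pt_lim (fun w => hangle (arcosh (x1 w)) (arcosh (x2 w)) (arcosh (x3 w))) v
    (gJ (x1 v) (x2 v) (x3 v) d1 d2 d3).
Proof. intros H1 H2 H3 g1 g2 g3 HD. unfold hangle.
  destruct (arcosh_vals (x1 v)) as [e1 f1]; [lra|].
  destruct (arcosh_vals (x2 v)) as [e2 f2]; [lra|].
  destruct (arcosh_vals (x3 v)) as [e3 f3]; [lra|].
  set (c1 := x1 v) in *. set (c2 := x2 v) in *. set (c3 := x3 v) in *.
  assert (p2 : 0 < c2*c2-1) by nra. assert (p3 : 0 < c3*c3-1) by nra.
  pose proof (sqrt_lt_R0 _ p2) as q2. pose proof (sqrt_sqrt _ (Rlt_le _ _ p2)) as r2.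
  pose proof (sqrt_lt_R0 _ p3) as q3. pose proof (sqrt_sqrt _ (Rlt_le _ _ p3)) as r3.
  pose proof (sqrt_lt_R0 _ HD) as qD. pose proof (sqrt_sqrt _ (Rlt_le _ _ HD)) as rD.
  set (s2 := sqrt (c2*c2-1)) in *. set (s3 := sqrt (c3*c3-1)) in *.
  set (q := sqrt (Dl c1 c2 c3)) in *.
  unfold Dl in rD.
  set (G := (c2 * c3 - c1) / (s2 * s3)).
  assert (HG : 1 - G*G = (q/(s2*s3))*(q/(s2*s3))).
  { unfold G. apply alg_HG; auto. }
  assert (HB : -1 < G < 1).
  { assert (0 < (q/(s2*s3))*(q/(s2*s3))). { apply Rmult_lt_0_compat; apply Rdiv_lt_0_compat; nra. }
    nra. }
  eapply dl_eq; [| apply (dl_comp acos (fun w => (cosh (arcosh (x2 w)) * cosh (arcosh (x3 w)) - cosh (arcosh (x1 w))) /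
            (sinh (arcosh (x2 w)) * sinh (arcosh (x3 w)))))].
  3: { cbv beta. fold c1 c2 c3. rewrite e1, e2, e3, f2, f3. fold s2 s3. fold G. apply dl_acos. exact HB. }
  2: { apply dl_div. apply dl_sub. apply dl_mul. apply (d_ch x2 v d2); auto. apply (d_ch x3 v d3); auto.
       apply (d_ch x1 v d1); auto.
       apply dl_mul. apply (d_sh x2 v d2); auto. apply (d_sh x3 v d3); auto.
       cbv beta. fold c1 c2 c3. rewrite f2, f3. fold s2 s3. nra. }
  cbv beta. fold c1 c2 c3. rewrite e1, e2, e3, f2, f3. fold s2 s3. fold G. fold c1 c2 c3. rewrite HG.
  rewrite sqrt_square by (apply Rlt_le, Rdiv_lt_0_compat; nra).
  unfold gJ. fold q. fold s2 s3. rewrite <- r2, <- r3. unfold G.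
  field_simplify_eq; [|repeat split; lra].
  replace (s2^2) with (c2*c2-1) by (rewrite <- r2; ring).
  replace (s3^2) with (c3*c3-1) by (rewrite <- r3; ring). ring.
Qed.

Definition Xv (I p q : R) := cosh (r_of_u p) * cosh (r_of_u q) + I * sinh (r_of_u p) * sinh (r_of_u q).
Definition Dv (I p q dp dq : R) :=
  dp * (sinh (r_of_u p) * (sinh (r_of_u p) * cosh (r_of_u q) + I * cosh (r_of_u p) * sinh (r_of_u q)))
  + dq * (sinh (r_of_u q) * (sinh (r_of_u q) * cosh (r_of_u p) + I * cosh (r_of_u q) * sinh (r_of_u p))).

Lemma dang3 (Ia Ib Ic : R) (fa ga fb gb fc gc : R -> R) v dfa dga dfb dgb dfc dgc :
  derivable_pt_lim fa v dfa -> derivable_pt_lim ga v dga ->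
  derivable_pt_lim fb v dfb -> derivable_pt_lim gb v dgb ->
  derivable_pt_lim fc v dfc -> derivable_pt_lim gc v dgc ->
  fa v < 0 -> ga v < 0 -> fb v < 0 -> gb v < 0 -> fc v < 0 -> gc v < 0 ->
  1 < Xv Ia (fa v) (ga v) -> 1 < Xv Ib (fb v) (gb v) -> 1 < Xv Ic (fc v) (gc v) ->
  0 < Dl (Xv Ia (fa v) (ga v)) (Xv Ib (fb v) (gb v)) (Xv Ic (fc v) (gc v)) ->
  derivable_pt_lim (fun w => hangle (len Ia (r_of_u (fa w)) (r_of_u (ga w)))
     (len Ib (r_of_u (fb w)) (r_of_u (gb w))) (len Ic (r_of_u (fc w)) (r_of_u (gc w)))) v
   (gJ (Xv Ia (fa v) (ga v)) (Xv Ib (fb v) (gb v)) (Xv Ic (fc v) (gc v))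
       (Dv Ia (fa v) (ga v) dfa dga) (Dv Ib (fb v) (gb v) dfb dgb) (Dv Ic (fc v) (gc v) dfc dgc)).
Proof. intros. unfold len.
  apply (d_angle (fun w => Xv Ia (fa w) (ga w)) (fun w => Xv Ib (fb w) (gb w)) (fun w => Xv Ic (fc w) (gc w))); auto;
  unfold Xv, Dv; apply d_X; auto.
Qed.

Definition U3 (u1 u2 u3 : R) (k : nat) : R := match k with 0%nat => u1 | 1%nat => u2 | _ => u3 end.
Definition Pf (u1 u2 u3 : R) (j k : nat) : R -> R := fun w => if Nat.eqb j k then w else U3 u1 u2 u3 k.
Definition dd (j k : nat) : R := if Nat.eqb j k then 1 else 0.

Lemma dP u1 u2 u3 j k v : derivable_pt_lim (Pf u1 u2 u3 j k) v (dd j k).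
Proof. unfold Pf, dd. destruct (Nat.eqb j k). apply dl_id. apply dl_const. Qed.
Lemma Pf_at u1 u2 u3 j k : Pf u1 u2 u3 j k (U3 u1 u2 u3 j) = U3 u1 u2 u3 k.
Proof. unfold Pf. destruct (Nat.eqb j k) eqn:E; auto. apply Nat.eqb_eq in E. subst; auto. Qed.

Definition Jm (I12 I23 I31 u1 u2 u3 : R) (i j : nat) : R :=
  let C0 := Xv I23 u2 u3 in let C1 := Xv I31 u3 u1 in let C2 := Xv I12 u1 u2 in
  let D0 := Dv I23 u2 u3 (dd j 1) (dd j 2) in
  let D1 := Dv I31 u3 u1 (dd j 2) (dd j 0) in
  let D2 := Dv I12 u1 u2 (dd j 0) (dd j 1) in
  match i with 0%nat => gJ C0 C1 C2 D0 D1 D2 | 1%nat => gJ C1 C2 C0 D1 D2 D0 | _ => gJ C2 C0 C1 D2 D0 D1 end.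

Lemma Xv_gt1 I p q : 0 <= I -> p < 0 -> q < 0 -> 1 < Xv I p q.
Proof. intros. unfold Xv. pose proof (r_A_gt1 p H0). pose proof (r_A_gt1 q H1).
  pose proof (r_B_pos p H0). pose proof (r_B_pos q H1).
  assert (0 <= I * sinh (r_of_u p) * sinh (r_of_u q)) by (apply Rmult_le_pos; [apply Rmult_le_pos|]; lra). nra. Qed.

Lemma dalpha (I12 I23 I31 u1 u2 u3 : R) (j : nat) :
  0 <= I12 -> 0 <= I23 -> 0 <= I31 -> u1 < 0 -> u2 < 0 -> u3 < 0 ->
  0 < Dl (Xv I23 u2 u3) (Xv I31 u3 u1) (Xv I12 u1 u2) ->
  let P := Pf u1 u2 u3 j in
  derivable_pt_lim (fun w => hangle (len I23 (r_of_u (P 1%nat w)) (r_of_u (P 2%nat w)))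
     (len I31 (r_of_u (P 2%nat w)) (r_of_u (P 0%nat w))) (len I12 (r_of_u (P 0%nat w)) (r_of_u (P 1%nat w))))
   (U3 u1 u2 u3 j) (Jm I12 I23 I31 u1 u2 u3 0 j) /\
  derivable_pt_lim (fun w => hangle (len I31 (r_of_u (P 2%nat w)) (r_of_u (P 0%nat w)))
     (len I12 (r_of_u (P 0%nat w)) (r_of_u (P 1%nat w))) (len I23 (r_of_u (P 1%nat w)) (r_of_u (P 2%nat w))))
   (U3 u1 u2 u3 j) (Jm I12 I23 I31 u1 u2 u3 1 j) /\
  derivable_pt_lim (fun w => hangle (len I12 (r_of_u (P 0%nat w)) (r_of_u (P 1%nat w)))
     (len I23 (r_of_u (P 1%nat w)) (r_of_u (P 2%nat w))) (len I31 (r_of_u (P 2%nat w)) (r_of_u (P 0%nat w))))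
   (U3 u1 u2 u3 j) (Jm I12 I23 I31 u1 u2 u3 2 j).
Proof. intros h12 h23 h31 n1 n2 n3 HD P. unfold Jm.
  assert (e0 : P 0%nat (U3 u1 u2 u3 j) = u1) by (apply Pf_at).
  assert (e1 : P 1%nat (U3 u1 u2 u3 j) = u2) by (apply Pf_at).
  assert (e2 : P 2%nat (U3 u1 u2 u3 j) = u3) by (apply Pf_at).
  pose proof (Xv_gt1 I23 u2 u3 h23 n2 n3). pose proof (Xv_gt1 I31 u3 u1 h31 n3 n1).
  pose proof (Xv_gt1 I12 u1 u2 h12 n1 n2).
  assert (HD1 : 0 < Dl (Xv I31 u3 u1) (Xv I12 u1 u2) (Xv I23 u2 u3)) by (unfold Dl in *; lra).
  assert (HD2 : 0 < Dl (Xv I12 u1 u2) (Xv I23 u2 u3) (Xv I31 u3 u1)) by (unfold Dl in *; lra).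
  split; [|split].
  - pose proof (dang3 I23 I31 I12 (P 1%nat) (P 2%nat) (P 2%nat) (P 0%nat) (P 0%nat) (P 1%nat) (U3 u1 u2 u3 j)
      _ _ _ _ _ _ (dP _ _ _ _ _ _) (dP _ _ _ _ _ _) (dP _ _ _ _ _ _) (dP _ _ _ _ _ _) (dP _ _ _ _ _ _) (dP _ _ _ _ _ _)) as HH.
    rewrite e0, e1, e2 in HH. apply HH; auto.
  - pose proof (dang3 I31 I12 I23 (P 2%nat) (P 0%nat) (P 0%nat) (P 1%nat) (P 1%nat) (P 2%nat) (U3 u1 u2 u3 j)
      _ _ _ _ _ _ (dP _ _ _ _ _ _) (dP _ _ _ _ _ _) (dP _ _ _ _ _ _) (dP _ _ _ _ _ _) (dP _ _ _ _ _ _) (dP _ _ _ _ _ _)) as HH.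
    rewrite e0, e1, e2 in HH. apply HH; auto.
  - pose proof (dang3 I12 I23 I31 (P 0%nat) (P 1%nat) (P 1%nat) (P 2%nat) (P 2%nat) (P 0%nat) (U3 u1 u2 u3 j)
      _ _ _ _ _ _ (dP _ _ _ _ _ _) (dP _ _ _ _ _ _) (dP _ _ _ _ _ _) (dP _ _ _ _ _ _) (dP _ _ _ _ _ _) (dP _ _ _ _ _ _)) as HH.
    rewrite e0, e1, e2 in HH. apply HH; auto.
Qed.

Lemma cosh_plus' x y : cosh (x + y) = cosh x * cosh y + sinh x * sinh y.
Proof. unfold cosh, sinh. rewrite Ropp_plus_distr, !exp_plus. field. Qed.
Lemma cosh_minus' x y : cosh (x - y) = cosh x * cosh y - sinh x * sinh y.
Proof. unfold Rminus. rewrite cosh_plus'. unfold cosh, sinh. rewrite Ropp_involutive. field. Qed.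
Lemma cosh_even x : cosh (- x) = cosh x.
Proof. unfold cosh. rewrite Ropp_involutive, Rplus_comm. reflexivity. Qed.
Lemma cosh_lt x y : 0 <= x -> x < y -> cosh x < cosh y.
Proof. intros. unfold cosh. rewrite !exp_Ropp.
  pose proof (exp_increasing _ _ H0). pose proof (exp_pos x).
  assert (1 <= exp x) by (rewrite <- exp_0; destruct H; [left; apply exp_increasing; auto| subst; lra]).
  set (a := exp x) in *. set (b := exp y) in *.
  assert (E : (b + / b)/2 - (a + /a)/2 = (b - a)*(a*b - 1)/(2*a*b)) by (field; lra).
  assert (0 < (b - a)*(a*b - 1)/(2*a*b)).
  { apply Rdiv_lt_0_compat; [apply Rmult_lt_0_compat|]; nra. }
  lra.
Qed.

Lemma tri_Dl C0 C1 C2 : 1 < C0 -> 1 < C1 -> 1 < C2 ->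
  arcosh C0 < arcosh C1 + arcosh C2 -> arcosh C1 < arcosh C2 + arcosh C0 -> arcosh C2 < arcosh C0 + arcosh C1 ->
  0 < Dl C0 C1 C2.
Proof. intros g0 g1 g2 t0 t1 t2.
  destruct (arcosh_vals C0) as [c0 s0]; [lra|]. destruct (arcosh_vals C1) as [c1 s1]; [lra|].
  destruct (arcosh_vals C2) as [c2 s2]; [lra|].
  pose proof (arcosh_nonneg C0 ltac:(lra)). pose proof (arcosh_nonneg C1 ltac:(lra)). pose proof (arcosh_nonneg C2 ltac:(lra)).
  assert (U : C0 < C1*C2 + sqrt (C1*C1-1) * sqrt (C2*C2-1)).
  { pose proof (cosh_plus' (arcosh C1) (arcosh C2)) as E. rewrite c1, c2, s1, s2 in E.
    rewrite <- E, <- c0 at 1. apply cosh_lt; auto. }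
  assert (L : C1*C2 - sqrt (C1*C1-1) * sqrt (C2*C2-1) < C0).
  { pose proof (cosh_minus' (arcosh C1) (arcosh C2)) as E. rewrite c1, c2, s1, s2 in E.
    rewrite <- E, <- c0 at 1.
    destruct (Rle_lt_dec (arcosh C2) (arcosh C1)).
    - apply cosh_lt; lra.
    - rewrite <- cosh_even. apply cosh_lt; lra. }
  assert (p1 : 0 <= C1*C1-1) by nra. assert (p2 : 0 <= C2*C2-1) by nra.
  pose proof (sqrt_sqrt _ p1). pose proof (sqrt_sqrt _ p2).
  set (a := sqrt (C1*C1-1)) in *. set (b := sqrt (C2*C2-1)) in *.
  assert ((C1*C2 - C0)*(C1*C2-C0) < (a*b)*(a*b)) by nra.
  unfold Dl. nra.
Qed.

Lemma sym_all (I12 I23 I31 u1 u2 u3 : R) :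
  let C0 := Xv I23 u2 u3 in let C1 := Xv I31 u3 u1 in let C2 := Xv I12 u1 u2 in
  let D01 := Dv I23 u2 u3 1 0 in let D02 := Dv I23 u2 u3 0 1 in
  let D10 := Dv I31 u3 u1 0 1 in let D12 := Dv I31 u3 u1 1 0 in
  let D20 := Dv I12 u1 u2 1 0 in let D21 := Dv I12 u1 u2 0 1 in
  (D01 + D02*C0)*(C1*C1-1) = (D10 + D12*C1)*(C0*C0-1) /\
  (D01*C0 + D02)*(C2*C2-1) = (D20 + D21*C2)*(C0*C0-1) /\
  (D10*C1 + D12)*(C2*C2-1) = (D20*C2 + D21)*(C1*C1-1).
Proof. intros. unfold C0, C1, C2, D01, D02, D10, D12, D20, D21, Xv, Dv.
  pose proof (cosh_sinh_sq (r_of_u u1)). pose proof (cosh_sinh_sq (r_of_u u2)). pose proof (cosh_sinh_sq (r_of_u u3)).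
  generalize dependent (cosh (r_of_u u1)). generalize dependent (sinh (r_of_u u1)).
  generalize dependent (cosh (r_of_u u2)). generalize dependent (sinh (r_of_u u2)).
  generalize dependent (cosh (r_of_u u3)). generalize dependent (sinh (r_of_u u3)).
  intros. clear C0 C1 C2 D01 D02 D10 D12 D20 D21.
  split; [|split]; nsatz.
Qed.

Lemma pd3 p q r a b c y0 y1 y2 : 0 < p -> 0 < p*q - a*a ->
  0 < p*(q*r - c*c) - a*(a*r - c*b) + b*(a*c - q*b) ->
  (y0 <> 0 \/ y1 <> 0 \/ y2 <> 0) ->
  0 < p*y0*y0 + q*y1*y1 + r*y2*y2 + 2*a*y0*y1 + 2*b*y0*y2 + 2*c*y1*y2.
Proof.
  intros Hp HM Hd Hy.
  set (M := p*q - a*a) in *. set (dt := p*(q*r - c*c) - a*(a*r - c*b) + b*(a*c - q*b)) in *.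
  set (F := p*y0*y0 + q*y1*y1 + r*y2*y2 + 2*a*y0*y1 + 2*b*y0*y2 + 2*c*y1*y2).
  assert (E : p*M*F = M*((p*y0 + a*y1 + b*y2)*(p*y0 + a*y1 + b*y2)) + (M*y1 + (p*c - a*b)*y2)*(M*y1 + (p*c - a*b)*y2) + p*dt*(y2*y2)).
  { unfold M, F, dt. ring. }
  assert (Hpos : 0 < p*M*F).
  { rewrite E.
    assert (h1 : 0 <= M*((p*y0 + a*y1 + b*y2)*(p*y0 + a*y1 + b*y2))) by (apply Rmult_le_pos; [lra| apply Rle_0_sqr]).
    assert (h2 : 0 <= (M*y1 + (p*c - a*b)*y2)*(M*y1 + (p*c - a*b)*y2)) by apply Rle_0_sqr.
    assert (h3 : 0 <= p*dt*(y2*y2)) by (apply Rmult_le_pos; [nra| apply Rle_0_sqr]).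
    destruct (Req_dec y2 0) as [z2|z2].
    - destruct (Req_dec y1 0) as [z1|z1].
      + assert (y0 <> 0) by tauto. subst y1 y2.
        assert (0 < M*((p*y0 + a*0 + b*0)*(p*y0 + a*0 + b*0))).
        { apply Rmult_lt_0_compat; auto. replace (p*y0+a*0+b*0) with (p*y0) by ring.
          assert (p*y0 <> 0) by (apply Rmult_integral_contrapositive; split; lra).
          pose proof (Rsqr_pos_lt _ H0). unfold Rsqr in H1. auto. }
        lra.
      + subst y2. assert (0 < (M*y1 + (p*c - a*b)*0)*(M*y1 + (p*c - a*b)*0)).
        { replace (M*y1 + (p*c - a*b)*0) with (M*y1) by ring.
          assert (M*y1 <> 0) by (apply Rmult_integral_contrapositive; split; lra).
          pose proof (Rsqr_pos_lt _ H). unfold Rsqr in H0. auto. }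
        lra.
    - assert (0 < p*dt*(y2*y2)).
      { apply Rmult_lt_0_compat. nra. pose proof (Rsqr_pos_lt _ z2). unfold Rsqr in H. auto. }
      lra. }
  assert (0 < p*M) by nra. nra.
Qed.
Lemma minor_pos (D01 D12 D10 D02 C0 C1 C2 : R) : 0 < D01 -> 0 < D12 -> 0 < D10 -> 0 < D02 ->
  1 < C2 -> 0 <= C0*C2 - C1 -> 0 <= C1*C2 - C0 ->
  0 < D01*D12*(C0*C2 - C1) + D01*D10*(C2*C2-1) + D02*D10*(C1*C2 - C0).
Proof. intros.
  assert (0 <= D01*D12*(C0*C2 - C1)) by (apply Rmult_le_pos; [nra|auto]).
  assert (0 <= D02*D10*(C1*C2 - C0)) by (apply Rmult_le_pos; [nra|auto]).
  assert (0 < D01*D10*(C2*C2-1)) by (apply Rmult_lt_0_compat; nra). lra. Qed.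

Lemma hneg (a b c : R) : 0 < a -> 0 < b -> 1 < c -> a*c - b < 0 -> b*c - a < 0 -> False.
Proof. intros. nra. Qed.
Lemma pos2 (a x b y : R) : 0 < a -> 1 < x -> 0 < b -> 1 < y -> 0 < a*x + b*y.
Proof. intros. nra. Qed.

Lemma core (C0 C1 C2 D01 D02 D10 D12 D20 D21 x0 x1 x2 : R) :
  1 < C0 -> 1 < C1 -> 1 < C2 -> 0 < D01 -> 0 < D02 -> 0 < D10 -> 0 < D12 -> 0 < D20 -> 0 < D21 ->
  0 < Dl C0 C1 C2 ->
  (D01 + D02*C0)*(C1*C1-1) = (D10 + D12*C1)*(C0*C0-1) ->
  (D01*C0 + D02)*(C2*C2-1) = (D20 + D21*C2)*(C0*C0-1) ->
  (D10*C1 + D12)*(C2*C2-1) = (D20*C2 + D21)*(C1*C1-1) ->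
  (x0 <> 0 \/ x1 <> 0 \/ x2 <> 0) ->
  x0 * gJ C0 C1 C2 0 D10 D20 * x0 + x0 * gJ C0 C1 C2 D01 0 D21 * x1 + x0 * gJ C0 C1 C2 D02 D12 0 * x2 +
 (x1 * gJ C1 C2 C0 D10 D20 0 * x0 + x1 * gJ C1 C2 C0 0 D21 D01 * x1 + x1 * gJ C1 C2 C0 D12 0 D02 * x2) +
 (x2 * gJ C2 C0 C1 D20 0 D10 * x0 + x2 * gJ C2 C0 C1 D21 D01 0 * x1 + x2 * gJ C2 C0 C1 0 D02 D12 * x2) < 0.
Proof.
  intros g0 g1 g2 p01 p02 p10 p12 p20 p21 HD s01 s02 s12 Hx.
  assert (z0 : 0 < C0*C0-1) by nra. assert (z1 : 0 < C1*C1-1) by nra. assert (z2 : 0 < C2*C2-1) by nra.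
  assert (e1 : Dl C1 C2 C0 = Dl C0 C1 C2) by (unfold Dl; ring).
  assert (e2 : Dl C2 C0 C1 = Dl C0 C1 C2) by (unfold Dl; ring).
  unfold gJ. rewrite e1, e2.
  pose proof (sqrt_lt_R0 _ HD) as qD.
  set (q := sqrt (Dl C0 C1 C2)) in *.
  unfold Dl in HD.
  set (y0 := (1-C0*C0)*x0 + (C0*C1 - C2)*x1 + (C2*C0 - C1)*x2).
  set (y1 := (C0*C1 - C2)*x0 + (1-C1*C1)*x1 + (C1*C2 - C0)*x2).
  set (y2 := (C2*C0 - C1)*x0 + (C1*C2 - C0)*x1 + (1 - C2*C2)*x2).
  set (T00 := D01*C2 + D02*C1). set (T01 := D01 + D02*C0). set (T02 := D01*C0 + D02).
  set (T10 := D10 + D12*C1). set (T11 := D10*C2 + D12*C0). set (T12 := D10*C1 + D12).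
  set (T20 := D20 + D21*C2). set (T21 := D20*C2 + D21). set (T22 := D20*C1 + D21*C0).
  set (Dp := 1 + 2 * C0 * C1 * C2 - C0 * C0 - C1 * C1 - C2 * C2) in *.
  assert (k0 : C0*C0-1 <> 0) by lra. assert (k1 : C1*C1-1 <> 0) by lra. assert (k2 : C2*C2-1 <> 0) by lra.
  set (F := y0*(T00*y0 + T01*y1 + T02*y2)/(C0*C0-1) + y1*(T10*y0 + T11*y1 + T12*y2)/(C1*C1-1)
           + y2*(T20*y0 + T21*y1 + T22*y2)/(C2*C2-1)).
  match goal with |- ?L < 0 => assert (EF : L = - F / (q * Dp)) end.
  { unfold F, y0, y1, y2, T00, T01, T02, T10, T11, T12, T20, T21, T22, Dp. field. repeat split; try lra. unfold Dp in HD; lra. }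
  rewrite EF.
  assert (HF : 0 < F).
  2: { assert (0 < q*Dp) by (apply Rmult_lt_0_compat; lra).
       assert (0 < F / (q*Dp)) by (apply Rdiv_lt_0_compat; lra).
       replace (- F / (q * Dp)) with (- (F / (q*Dp))) by (field; lra). lra. }
  set (a := T01/(C0*C0-1)). set (b := T02/(C0*C0-1)). set (c := T12/(C1*C1-1)).
  set (r0 := T00/(C0*C0-1)). set (r1 := T11/(C1*C1-1)). set (r2 := T22/(C2*C2-1)).
  assert (e10 : T10/(C1*C1-1) = a).
  { unfold a, T10, T01. field_simplify_eq; [lra| split; auto]. }
  assert (e20 : T20/(C2*C2-1) = b).
  { unfold b, T20, T02. field_simplify_eq; [lra| split; auto]. }
  assert (e21 : T21/(C2*C2-1) = c).
  { unfold c, T21, T12. field_simplify_eq; [lra| split; auto]. }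
  assert (EF2 : F = r0*y0*y0 + r1*y1*y1 + r2*y2*y2 + a*y0*y1 + (T10/(C1*C1-1))*y0*y1 + b*y0*y2
     + (T20/(C2*C2-1))*y0*y2 + c*y1*y2 + (T21/(C2*C2-1))*y1*y2).
  { unfold F, r0, r1, r2, a, b, c. field. auto. }
  rewrite e10, e20, e21 in EF2.
  assert (Edet : r0*(r1*r2 - c*(T21/(C2*C2-1))) - a*((T10/(C1*C1-1))*r2 - c*(T20/(C2*C2-1)))
      + b*((T10/(C1*C1-1))*(T21/(C2*C2-1)) - r1*(T20/(C2*C2-1)))
     = (D01*D12*D20 + D02*D10*D21)*Dp/((C0*C0-1)*(C1*C1-1)*(C2*C2-1))).
  { unfold r0, r1, r2, a, b, c, T00, T01, T02, T10, T11, T12, T20, T21, T22, Dp. field. auto. }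
  rewrite e10, e20, e21 in Edet.
  assert (Hdet : 0 < r0*(r1*r2 - c*c) - a*(a*r2 - c*b) + b*(a*c - r1*b)).
  { rewrite Edet. apply Rdiv_lt_0_compat.
    - apply Rmult_lt_0_compat; [|exact HD].
      assert (0 < D01*D12*D20) by (repeat apply Rmult_lt_0_compat; auto).
      assert (0 < D02*D10*D21) by (repeat apply Rmult_lt_0_compat; auto). lra.
    - apply Rmult_lt_0_compat; [apply Rmult_lt_0_compat|]; auto. }
  assert (M01 : r0*r1 - a*(T10/(C1*C1-1)) = (D01*D12*(C0*C2 - C1) + D01*D10*(C2*C2-1) + D02*D10*(C1*C2 - C0))/((C0*C0-1)*(C1*C1-1))).
  { unfold r0, r1, a, T00, T01, T10, T11. field. auto. }
  assert (M12 : r1*r2 - c*(T21/(C2*C2-1)) = (D21*D10*(C2*C0 - C1) + D21*D12*(C0*C0-1) + D20*D12*(C1*C0 - C2))/((C1*C1-1)*(C2*C2-1))).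
  { unfold r1, r2, c, T11, T12, T21, T22. field. auto. }
  assert (M20 : r2*r0 - (T20/(C2*C2-1))*b = (D20*D01*(C2*C1 - C0) + D20*D02*(C1*C1-1) + D21*D02*(C0*C1 - C2))/((C2*C2-1)*(C0*C0-1))).
  { unfold r2, r0, b, T00, T02, T20, T22. field. auto. }
  rewrite e10 in M01. rewrite e21 in M12. rewrite e20 in M20.
  assert (Hy : y0 <> 0 \/ y1 <> 0 \/ y2 <> 0).
  { destruct (Req_dec y0 0) as [w0|w0]; [|tauto].
    destruct (Req_dec y1 0) as [w1|w1]; [|tauto].
    destruct (Req_dec y2 0) as [w2|w2]; [|tauto].
    exfalso.
    assert (h0 : Dp * x0 = y0 + C2*y1 + C1*y2) by (unfold Dp, y0, y1, y2; ring).
    assert (h1 : Dp * x1 = C2*y0 + y1 + C0*y2) by (unfold Dp, y0, y1, y2; ring).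
    assert (h2 : Dp * x2 = C1*y0 + C0*y1 + y2) by (unfold Dp, y0, y1, y2; ring).
    rewrite w0, w1, w2 in h0, h1, h2.
    assert (Dp <> 0) by lra.
    destruct Hx as [Hx|[Hx|Hx]]; apply Hx;
    [apply (Rmult_eq_reg_l Dp) | apply (Rmult_eq_reg_l Dp) | apply (Rmult_eq_reg_l Dp)]; auto; lra. }
  rewrite EF2.
  assert (pc : forall u v : R, 0 < u -> 0 < v -> 0 < u / v) by (intros; apply Rdiv_lt_0_compat; auto).
  destruct (Rle_lt_dec 0 (C0*C2 - C1)) as [u1|u1].
  - destruct (Rle_lt_dec 0 (C1*C2 - C0)) as [u0|u0].
    + assert (HM : 0 < r0*r1 - a*a).
      { rewrite M01. apply pc. apply minor_pos; auto. apply Rmult_lt_0_compat; auto. }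
      assert (Hp : 0 < r0) by (unfold r0, T00; apply pc; [apply pos2|]; auto).
      pose proof (pd3 r0 r1 r2 a b c y0 y1 y2 Hp HM Hdet Hy). lra.
    + assert (u2 : 0 <= C0*C1 - C2).
      { destruct (Rle_lt_dec 0 (C0*C1 - C2)); auto. exfalso. apply (hneg C0 C2 C1); lra. }
      assert (HM : 0 < r1*r2 - c*c).
      { rewrite M12. apply pc. apply minor_pos; auto; lra. apply Rmult_lt_0_compat; auto. }
      assert (Hp : 0 < r1) by (unfold r1, T11; apply pc; [apply pos2|]; auto).
      assert (Hd' : 0 < r1*(r2*r0 - b*b) - c*(c*r0 - b*a) + a*(c*b - r2*a)).
      { replace (r1*(r2*r0 - b*b) - c*(c*r0 - b*a) + a*(c*b - r2*a)) with (r0*(r1*r2 - c*c) - a*(a*r2 - c*b) + b*(a*c - r1*b)) by ring. exact Hdet. }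
      pose proof (pd3 r1 r2 r0 c a b y1 y2 y0 Hp HM Hd' ltac:(tauto)). lra.
  - assert (u0 : 0 <= C1*C2 - C0).
    { destruct (Rle_lt_dec 0 (C1*C2 - C0)); auto. exfalso. apply (hneg C0 C1 C2); lra. }
    assert (u2 : 0 <= C0*C1 - C2).
    { destruct (Rle_lt_dec 0 (C0*C1 - C2)); auto. exfalso. apply (hneg C1 C2 C0); lra. }
    assert (HM : 0 < r2*r0 - b*b).
    { rewrite M20. apply pc. apply minor_pos; auto; lra. apply Rmult_lt_0_compat; auto. }
    assert (Hp : 0 < r2) by (unfold r2, T22; apply pc; [apply pos2|]; auto).
    assert (Hd' : 0 < r2*(r0*r1 - a*a) - b*(b*r1 - a*c) + c*(b*a - r0*c)).
    { replace (r2*(r0*r1 - a*a) - b*(b*r1 - a*c) + c*(b*a - r0*c)) with (r0*(r1*r2 - c*c) - a*(a*r2 - c*b) + b*(a*c - r1*b)) by ring. exact Hdet. }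
    pose proof (pd3 r2 r0 r1 b c a y2 y0 y1 Hp HM Hd' ltac:(tauto)). lra.
Qed.

Lemma Dv_pos10 I p q : 0 <= I -> p < 0 -> q < 0 -> 0 < Dv I p q 1 0.
Proof. intros. unfold Dv. pose proof (r_A_gt1 p H0). pose proof (r_A_gt1 q H1).
  pose proof (r_B_pos p H0). pose proof (r_B_pos q H1).
  assert (0 <= I * cosh (r_of_u p) * sinh (r_of_u q)) by (apply Rmult_le_pos; [apply Rmult_le_pos|]; lra).
  assert (0 < sinh (r_of_u p) * cosh (r_of_u q)) by (apply Rmult_lt_0_compat; lra).
  assert (0 < sinh (r_of_u p) * (sinh (r_of_u p) * cosh (r_of_u q) + I * cosh (r_of_u p) * sinh (r_of_u q))) by (apply Rmult_lt_0_compat; lra).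
  lra. Qed.
Lemma Dv_pos01 I p q : 0 <= I -> p < 0 -> q < 0 -> 0 < Dv I p q 0 1.
Proof. intros. unfold Dv. pose proof (r_A_gt1 p H0). pose proof (r_A_gt1 q H1).
  pose proof (r_B_pos p H0). pose proof (r_B_pos q H1).
  assert (0 <= I * cosh (r_of_u q) * sinh (r_of_u p)) by (apply Rmult_le_pos; [apply Rmult_le_pos|]; lra).
  assert (0 < sinh (r_of_u q) * cosh (r_of_u p)) by (apply Rmult_lt_0_compat; lra).
  assert (0 < sinh (r_of_u q) * (sinh (r_of_u q) * cosh (r_of_u p) + I * cosh (r_of_u q) * sinh (r_of_u p))) by (apply Rmult_lt_0_compat; lra).
  lra. Qed.
Lemma Dv00 I p q : Dv I p q 0 0 = 0.
Proof. unfold Dv. ring. Qed.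

Theorem lemma3p4 (I12 I23 I31 : R) (h12 : 0 <= I12) (h23 : 0 <= I23) (h31 : 0 <= I31)
  (u1 u2 u3 : R) (hU : U_H123 I12 I23 I31 u1 u2 u3) :
  exists J : nat -> nat -> R,
    (forall i j : nat, (i <= 2)%nat -> (j <= 2)%nat ->
       derivable_pt_lim (section (alpha I12 I23 I31 i) j u1 u2 u3)
         (match j with 0%nat => u1 | 1%nat => u2 | _ => u3 end) (J i j)) /\
    neg_def3 J.
Proof.
  destruct hU as (n1 & n2 & n3 & T). cbv zeta in T.
  unfold l1, l2, l3, len in T. fold (Xv I23 u2 u3) (Xv I31 u3 u1) (Xv I12 u1 u2) in T.
  pose proof (Xv_gt1 I23 u2 u3 h23 n2 n3) as g0. pose proof (Xv_gt1 I31 u3 u1 h31 n3 n1) as g1.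
  pose proof (Xv_gt1 I12 u1 u2 h12 n1 n2) as g2.
  destruct T as (t0 & t1 & t2).
  assert (HD : 0 < Dl (Xv I23 u2 u3) (Xv I31 u3 u1) (Xv I12 u1 u2)) by (apply tri_Dl; auto).
  exists (Jm I12 I23 I31 u1 u2 u3). split.
  - intros i j Hi Hj.
    assert (j = 0%nat \/ j = 1%nat \/ j = 2%nat) as Hj' by lia.
    assert (i = 0%nat \/ i = 1%nat \/ i = 2%nat) as Hi' by lia.
    destruct Hj' as [ -> | [ -> | -> ] ];
    [ destruct (dalpha I12 I23 I31 u1 u2 u3 0 h12 h23 h31 n1 n2 n3 HD) as (a0 & a1 & a2)
    | destruct (dalpha I12 I23 I31 u1 u2 u3 1 h12 h23 h31 n1 n2 n3 HD) as (a0 & a1 & a2)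
    | destruct (dalpha I12 I23 I31 u1 u2 u3 2 h12 h23 h31 n1 n2 n3 HD) as (a0 & a1 & a2) ];
    destruct Hi' as [ -> | [ -> | -> ] ]; assumption.
  - destruct (sym_all I12 I23 I31 u1 u2 u3) as (s01 & s02 & s12).
    unfold neg_def3. intros x Hx. simpl.
    rewrite !Dv00.
    apply core; auto; try apply Dv_pos10; try apply Dv_pos01; auto.
Qed.
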